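(* Let $G$ and $H$ be finitely generated groups and let $f:G\to H$ be a surjective homomorphism with finite kernel. For every generating $n$-tuple $S=(g_1,\dots,g_n)$ of $G$, if $\Gamma_n(G,S)$ has exponential growth then $\Gamma_n(H,f(S))$ has exponential growth, where $f(S)=(f(g_1),\dots,f(g_n))$. In particular, if $G$ has exponential Nielsen growth, then $H$ has exponential Nielsen growth.
   Context: For a group $G$, a generating $n$-tuple is $(g_1,\dots,g_n)\in G^n$ with $G=\langle g_1,\dots,g_n\rangle$. The product replacement graph $\Gamma_n(G)$ has vertices the generating $n$-tuples, with edges from $(g_1,\dots,g_n)$ to each tuple obtained by replacing $g_j$ by $g_jg_i^{\pm1}$ or $g_i^{\pm1}g_j$, for every ordered pair $i\neq j$. For $S\in\Gamma_n(G)$, $\Gamma_n(G,S)$ is the connected component of $\Gamma_n(G)$ containing $S$ (more generally $\Gamma_{n+m}(G,S)$ is the component containing $S$ padded with $m$ identity entries). For a graph $\Gamma$ and vertex $v$, $B_\Gamma(v,r)$ is the set of vertices at path distance at most $r$ from $v$; a graph has exponential growth from $v$ if $|B_\Gamma(v,r)|\ge\alpha^r$ for some $\alpha>1$ and all sufficiently large $r$; a connected graph has exponential growth if it has exponential growth from some (equivalently every) vertex. $G$ has exponential Nielsen growth if $\Gamma_n(G,S)$ has exponential growth for some $n$ and some generating $n$-tuple $S$. *)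

(* Defs.v *)
From Stdlib Require Import Reals List.
From mathcomp Require Import ssreflect ssrbool eqtype ssrnat fintype.
Set Implicit Arguments.
Unset Strict Implicit.

Record Group := {
  carrier :> Type;
  gmul : carrier -> carrier -> carrier;
  gone : carrier;
  ginv : carrier -> carrier;
  gmulA : forall x y z, gmul x (gmul y z) = gmul (gmul x y) z;
  gmul1l : forall x, gmul gone x = x;
  gmul1r : forall x, gmul x gone = x;
  gmulVl : forall x, gmul (ginv x) x = gone;
  gmulVr : forall x, gmul x (ginv x) = gone
}.
Arguments gmul {g}.
Arguments gone {g}.
Arguments ginv {g}.

Definition tuple_of (G : Group) (n : nat) := 'I_n -> G.

Definition generates (G : Group) (n : nat) (T : tuple_of G n) : Prop :=
  forall P : G -> Prop,
    P gone ->
    (forall x y, P x -> P y -> P (gmul x y)) ->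
    (forall x, P x -> P (ginv x)) ->
    (forall i, P (T i)) ->
    forall x, P x.

Definition finitely_generated (G : Group) : Prop :=
  exists n (T : tuple_of G n), generates T.

Definition upd (G : Group) (n : nat) (T : tuple_of G n) (j : 'I_n) (x : G)
  : tuple_of G n := fun k => if k == j then x else T k.

Definition nielsen_move (G : Group) (n : nat) (T T' : tuple_of G n) : Prop :=
  exists (i j : 'I_n) (e : bool), i <> j /\
    let h := if e then T i else ginv (T i) in
    (T' = upd T j (gmul (T j) h) \/ T' = upd T j (gmul h (T j))).

(* edges of the product replacement graph Gamma_n(G) (vertices: generating n-tuples) *)
Definition pr_edge (G : Group) (n : nat) (T T' : tuple_of G n) : Prop :=
  generates T /\ generates T' /\ nielsen_move T T'.

Inductive within (G : Group) (n : nat) : nat -> tuple_of G n -> tuple_of G n -> Prop :=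
| within_refl : forall r v, within r v v
| within_step : forall r v u w, within r v u -> pr_edge u w -> within (S r) v w.

Definition in_ball (G : Group) (n : nat) (v : tuple_of G n) (r : nat) (w : tuple_of G n) :=
  within r v w.

Definition in_component (G : Group) (n : nat) (S w : tuple_of G n) : Prop :=
  generates S /\ exists r, within r S w.

(* |B(v,r)| >= alpha^r for some alpha > 1 and all large r
   (the ball is finite; "has at least alpha^r elements" is expressed by a
    duplicate-free list of ball elements of that length). *)
Definition exp_growth_from (G : Group) (n : nat) (v : tuple_of G n) : Prop :=
  exists alpha : R, (1 < alpha)%R /\
    exists r0 : nat, forall r : nat, (r0 <= r)%coq_nat ->
      exists l : list (tuple_of G n),
        NoDup l /\ (forall w, In w l -> in_ball v r w) /\
        (alpha ^ r <= INR (length l))%R.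

Definition component_exp_growth (G : Group) (n : nat) (S : tuple_of G n) : Prop :=
  exists v, in_component S v /\ exp_growth_from v.

Definition exp_nielsen_growth (G : Group) : Prop :=
  exists n (S : tuple_of G n), generates S /\ component_exp_growth S.

Definition is_hom (G H : Group) (f : G -> H) : Prop :=
  forall x y, f (gmul x y) = gmul (f x) (f y).

Definition finite_kernel (G H : Group) (f : G -> H) : Prop :=
  exists l : list G, forall x, f x = gone -> In x l.

(* Main.v *)
Require Import Defs.
From Stdlib Require Import Reals List.
From mathcomp Require Import ssreflect ssrbool eqtype ssrnat fintype.
From mathcomp Require Import seq.
From Stdlib Require Import Classical FunctionalExtensionality Lra Lia Psatz.
Import List.

Lemma hom1 (G H : Group) (f : G -> H) : is_hom f -> f gone = gone.
Proof.
move=> hf.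
have e : f gone = gmul (f gone) (f gone) by rewrite -hf gmul1l.
have := gmulVl (f gone).
rewrite {2}e gmulA gmulVl gmul1l => -> //.
Qed.

Lemma homV (G H : Group) (f : G -> H) : is_hom f -> forall x, f (ginv x) = ginv (f x).
Proof.
move=> hf x.
have e : gmul (f (ginv x)) (f x) = gone by rewrite -hf gmulVl hom1.
rewrite -[f (ginv x)]gmul1r -(gmulVr (f x)) gmulA e gmul1l //.
Qed.

Lemma gen_map (G H : Group) (f : G -> H) n (T : tuple_of G n) :
  is_hom f -> (forall y : H, exists x : G, f x = y) ->
  generates T -> generates (fun i => f (T i)).
Proof.
move=> hf sf gT P P1 Pm Pi PT y.
case: (sf y) => x <-.
apply: (gT (fun x => P (f x))) => //.
- by rewrite hom1.
- by move=> a b Pa Pb; rewrite hf; apply: Pm.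
- by move=> a Pa; rewrite homV //; apply: Pi.
Qed.

Lemma move_map (G H : Group) (f : G -> H) n (T T' : tuple_of G n) :
  is_hom f -> nielsen_move T T' ->
  nielsen_move (fun i => f (T i)) (fun i => f (T' i)).
Proof.
move=> hf [i [j [e [ne HH]]]]; exists i, j, e; split => //.
cbv zeta in HH |- *.
case: e HH => /= [[->|->]|[->|->]]; [left|right|left|right];
  apply: functional_extensionality => k; rewrite /upd; case: (k == j) => //;
  rewrite hf //; rewrite (@homV G H f hf) //.
Qed.

Lemma within_map (G H : Group) (f : G -> H) n r (v w : tuple_of G n) :
  is_hom f -> (forall y : H, exists x : G, f x = y) ->
  within r v w -> within r (fun i => f (v i)) (fun i => f (w i)).
Proof.
move=> hf sf; elim => [r0 v0|r0 v0 u w0 _ IH [gu [gw mv]]].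
- exact: within_refl.
- apply: within_step IH _; split; [|split].
  + exact: gen_map.
  + exact: gen_map.
  + exact: move_map.
Qed.

Lemma dedup (X : Type) (L : list X) :
  exists L', NoDup L' /\ forall x, In x L <-> In x L'.
Proof.
elim: L => [|a L [L' [nd e]]]; first by exists nil; split => //; constructor.
case: (classic (In a L')) => ha.
- exists L'; split => // x /=; split; [case=> [<-|]|] => //; first by move/e.
  by move/e; right.
- exists (a :: L'); split; first by constructor.
  move=> x /=; split; case=> [->|h]; by [left | right; apply/e | right; apply/e].
Qed.

Fixpoint ec (G : Group) n (l : list G) (s : list 'I_n) : list ('I_n -> G) :=
  match s with
  | nil => (fun _ => gone) :: nil
  | a :: s' => flat_map (fun g => map (fun c => fun x => if x == a then g else c x) (ec G n l s')) l
  end.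
Arguments ec {G n}.

Lemma len_fm (A B C : Type) (h : A -> B -> C) (l : list A) (E : list B) :
  length (flat_map (fun g => map (h g) E) l) = (length l * length E)%coq_nat.
Proof.
elim: l => //= a l IH; by rewrite length_app length_map IH.
Qed.

Lemma ec_mem (G : Group) n (l : list G) (s : list 'I_n) (c : 'I_n -> G) :
  (forall x, In x s -> In (c x) l) ->
  exists d, In d (ec l s) /\ forall x, In x s -> d x = c x.
Proof.
elim: s c => [|a s IH] c hc /=.
- by exists (fun _ => gone); split => //; left.
- case: (IH c (fun x hx => hc x (or_intror hx))) => d' [hd' e'].
  exists (fun x => if x == a then c a else d' x); split.
  + apply/in_flat_map; exists (c a); split; first by apply: hc; left.
    by apply/in_map_iff; exists d'.
  + move=> x hx; case: eqP => [->//|ne]; apply: e'; case: hx => // h; by case: ne.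
Qed.

Lemma in_In (T : eqType) (x : T) (s : list T) : x \in s -> In x s.
Proof.
elim: s => // a s IH; rewrite seq.in_cons; case/orP => [/eqP ->|h]; by [left | right; apply: IH].
Qed.

Lemma cover (G H : Group) (f : G -> H) n (l : list G) :
  is_hom f -> (forall x, f x = gone -> In x l) ->
  forall (L : list (tuple_of G n)) (L' : list (tuple_of H n)),
  (forall u, In u L' -> exists T, In T L /\ (fun i => f (T i)) = u) ->
  exists M : list (tuple_of G n),
    length M = (length L' * length (ec l (enum 'I_n)))%coq_nat /\
    forall w, In (fun i => f (w i)) L' -> In w M.
Proof.
move=> hf hk L; elim => [|u L' IH] hL'.
- by exists nil.
- case: IH => [v hv|M [lM hM]]; first by apply: hL'; right.
  case: (hL' u (or_introl (Logic.eq_refl u))) => Tu [_ eTu].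
  exists (map (fun d => fun i => gmul (Tu i) (d i)) (ec l (enum 'I_n)) ++ M); split.
  + by rewrite length_app length_map lM.
  + move=> w /= [hw|hw]; last by apply/in_or_app; right; apply: hM.
    apply/in_or_app; left.
    case: (@ec_mem G n l (enum 'I_n) (fun i => gmul (ginv (Tu i)) (w i))).
    * move=> x _; apply: hk; rewrite hf homV //.
      have := f_equal (fun F => F x) (eq_trans eTu hw).
      move=> /= ->; exact: gmulVl.
    * move=> d [hd ed]; apply/in_map_iff; exists d; split => //.
      apply: functional_extensionality => i; rewrite ed; last by apply: in_In; rewrite mem_enum.
      by rewrite gmulA gmulVr gmul1l.
Qed.

Lemma growth_map (G H : Group) (f : G -> H) n (v : tuple_of G n) :
  is_hom f -> (forall y : H, exists x : G, f x = y) -> finite_kernel f ->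
  exp_growth_from v -> exp_growth_from (fun i => f (v i)).
Proof.
move=> hf sf [l hk] [alpha [ha [r0 hr]]].
set c := length (ec l (enum 'I_n)).
have hb : (1 < sqrt alpha)%R.
  rewrite -sqrt_1; apply: sqrt_lt_1_alt; lra.
have [N hN] := Pow_x_infinity (sqrt alpha) (ltac:(rewrite Rabs_pos_eq; lra)) (INR c).
exists (sqrt alpha); split => //; exists (Nat.max r0 N) => r hr'.
have [L [ndL [inL szL]]] := hr r (ltac:(lia)).
have [L' [ndL' eL']] := @dedup _ (map (fun T => fun i => f (T i)) L).
have hpre : forall u, In u L' -> exists T, In T L /\ (fun i => f (T i)) = u.
  move=> u /eL' /in_map_iff [T [<- hT]]; by exists T.
have [M [lM hM]] := @cover G H f n l hf hk L L' hpre.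
exists L'; split => //; split.
  move=> w /eL' /in_map_iff [T [<- hT]]; apply: within_map => //; exact: inL.
have le1 : (length L <= length M)%coq_nat.
  apply: NoDup_incl_length => // w hw; apply: hM; apply/eL'; apply/in_map_iff; by exists w.
have le2 : (INR (length L) <= INR (length L') * INR c)%R.
  rewrite -mult_INR -lM; apply: le_INR; exact: le1.
have hc : (INR c <= sqrt alpha ^ r)%R.
  have := hN r (ltac:(lia)); rewrite Rabs_pos_eq; [lra|].
  apply: pow_le; lra.
have ea : (alpha ^ r = sqrt alpha ^ r * sqrt alpha ^ r)%R.
  rewrite -Rpow_mult_distr sqrt_sqrt //; lra.
have hp : (0 < sqrt alpha ^ r)%R by apply: pow_lt; lra.
have h0 := pos_INR (length L').
set b := (sqrt alpha ^ r)%R in hc ea hp *.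
set x := INR (length L') in le2 h0 *.
have : (b * b <= x * b)%R.
  have : (x * INR c <= x * b)%R by apply: Rmult_le_compat_l.
  lra.
move=> h; nra.
Qed.

Theorem proposition3p6 (G H : Group) (f : G -> H) :
  finitely_generated G -> finitely_generated H ->
  is_hom f -> (forall y : H, exists x : G, f x = y) -> finite_kernel f ->
  (forall (n : nat) (S : tuple_of G n),
      generates S -> component_exp_growth S ->
      component_exp_growth (fun i => f (S i)))
  /\ (exp_nielsen_growth G -> exp_nielsen_growth H).
Proof.
move=> _ _ hf sf fk.
have part1 : forall (n : nat) (S : tuple_of G n),
      generates S -> component_exp_growth S ->
      component_exp_growth (fun i => f (S i)).
  move=> n S gS [v [[_ [r hr]] gv]].
  exists (fun i => f (v i)); split; last exact: growth_map.
  split; first exact: gen_map.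
  exists r; exact: within_map.
split => //.
move=> [n [S [gS cS]]]; exists n, (fun i => f (S i)); split.
  exact: gen_map.
exact: part1.
Qed.
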